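(* For a locally compact group $G$ the following are equivalent: (i) $G$ admits a uniform, coarsely geodesic metric; (ii) $G$ admits a uniform, quasi-geodesic metric; (iii) $G$ admits a left-invariant, proper, quasi-geodesic metric; (iv) $G$ admits a left-invariant proper metric for which it is quasi-isometric to a graph of bounded degree; (v) $G$ is compactly generated.
   Context: A metric $d$ on $G$ is uniform if for sequences $(g_n,h_n)$, $d(g_n,h_n)\to\infty$ iff $g_n^{-1}h_n$ eventually leaves every compact subset. Proper: closed balls are compact. For $b>0$, a $b$-chain from $x$ to $y$ is $x=x_0,\dots,x_m=y$ with $d(x_i,x_{i+1})\le b$; $d_b(x,y)=\inf\sum_i d(x_i,x_{i-1})$ over $b$-chains. $(X,d)$ is quasi-geodesic if for some $b>0$ the identity $(X,d)\to(X,d_b)$ is a quasi-isometry; coarsely geodesic if for some $b>0$, $d_b$ is finite and for every $R$ there is $R'$ with $d(x,y)\le R\Rightarrow d_b(x,y)\le R'$ (the identity $(X,d_b)\to(X,d)$ is a uniform embedding). A quasi-isometry $F$ satisfies $C^{-1}d(x,y)-C\le d(F(x),F(y))\le Cd(x,y)+C$ and has image at bounded distance from every point; graphs carry their path metric. *)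

(* Defs.v *)
From HB Require Import structures.
From mathcomp Require Import all_boot all_order all_algebra.
From mathcomp Require Import all_classical all_reals ereal topology normedtype.
Set Implicit Arguments. Unset Strict Implicit. Unset Printing Implicit Defensive.
Import Order.TTheory GRing.Theory Num.Theory.
Local Open Scope classical_set_scope.
Local Open Scope ring_scope.

Definition is_lc_group (T : topologicalType) (mul : T -> T -> T) (inv : T -> T)
    (e : T) : Prop :=
  [/\ (forall x y z, mul x (mul y z) = mul (mul x y) z),
      (forall x, mul e x = x /\ mul x e = x),
      (forall x, mul (inv x) x = e /\ mul x (inv x) = e),
      continuous (fun p : T * T => mul p.1 p.2) /\ continuous inv &
      hausdorff_space T /\
      (forall x : T, exists K : set T, compact K /\ nbhs x K)].

Definition compactly_generated (T : topologicalType) (mul : T -> T -> T)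
    (inv : T -> T) (e : T) : Prop :=
  exists K : set T, compact K /\
    forall H : set T, H e -> (forall x y, H x -> H y -> H (mul x y)) ->
      (forall x, H x -> H (inv x)) -> K `<=` H -> H = setT.

Definition is_metric (R : realType) (T : Type) (d : T -> T -> R) : Prop :=
  [/\ (forall x y, 0 <= d x y), (forall x y, d x y = 0 <-> x = y),
      (forall x y, d x y = d y x) &
      (forall x y z, d x z <= d x y + d y z)].

Definition uniform_metric (R : realType) (T : topologicalType)
    (mul : T -> T -> T) (inv : T -> T) (d : T -> T -> R) : Prop :=
  forall g h : nat -> T,
    (forall M : R, exists N, forall n, (N <= n)%N -> M < d (g n) (h n)) <->
    (forall K : set T, compact K ->
       exists N, forall n, (N <= n)%N -> ~ K (mul (inv (g n)) (h n))).

Definition left_invariant (R : realType) (T : Type) (mul : T -> T -> T)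
    (d : T -> T -> R) : Prop :=
  forall g x y, d (mul g x) (mul g y) = d x y.

Definition proper_metric (R : realType) (T : topologicalType)
    (d : T -> T -> R) : Prop :=
  forall (x : T) (r : R), compact [set y | d x y <= r].

(* b-chains: x = x0, x1, ..., xm = y with the list l = [x1; ...; xm]. *)
Fixpoint chain_ok (R : realType) (T : Type) (d : T -> T -> R) (b : R)
    (x y : T) (l : seq T) : Prop :=
  match l with
  | [::] => x = y
  | z :: l' => d x z <= b /\ chain_ok d b z y l'
  end.

Fixpoint chain_len (R : realType) (T : Type) (d : T -> T -> R) (x : T)
    (l : seq T) : R :=
  match l with
  | [::] => 0
  | z :: l' => d x z + chain_len d z l'
  end.

Definition chain_dist (R : realType) (T : Type) (d : T -> T -> R) (b : R)
    (x y : T) : \bar R :=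
  ereal_inf [set (chain_len d x l)%:E | l in [set l | chain_ok d b x y l]].

Definition quasi_geodesic (R : realType) (T : Type) (d : T -> T -> R) : Prop :=
  exists b : R, 0 < b /\ exists C : R, 0 < C /\
    forall x y : T,
      ((C^-1 * d x y - C)%:E <= chain_dist d b x y)%E /\
      (chain_dist d b x y <= (C * d x y + C)%:E)%E.

Definition coarsely_geodesic (R : realType) (T : Type) (d : T -> T -> R) : Prop :=
  exists b : R, 0 < b /\
    (forall x y : T, (chain_dist d b x y < +oo)%E) /\
    forall r : R, exists r' : R, forall x y : T,
      d x y <= r -> (chain_dist d b x y <= r'%:E)%E.

Definition is_graph (V : Type) (adj : V -> V -> Prop) : Prop :=
  (forall u v, adj u v -> adj v u) /\ (forall v, ~ adj v v).

(* list membership for an arbitrary type (no decidable equality needed) *)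
Fixpoint in_list (V : Type) (w : V) (l : seq V) : Prop :=
  match l with [::] => False | z :: l' => z = w \/ in_list w l' end.

Definition bounded_degree (V : Type) (adj : V -> V -> Prop) : Prop :=
  exists k : nat, forall v : V, exists l : seq V,
    (size l <= k)%N /\ forall w, adj v w -> in_list w l.

Inductive walk (V : Type) (adj : V -> V -> Prop) : nat -> V -> V -> Prop :=
  | walk0 v : walk adj 0 v v
  | walkS n u w v : adj u w -> walk adj n w v -> walk adj n.+1 u v.

Definition graph_dist (R : realType) (V : Type) (adj : V -> V -> Prop)
    (u v : V) : \bar R :=
  ereal_inf [set ((n%:R : R)%:E) | n in [set n | walk adj n u v]].

Definition qi_to_graph (R : realType) (T V : Type) (d : T -> T -> R)
    (adj : V -> V -> Prop) (F : T -> V) : Prop :=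
  exists C : R, 0 < C /\
    (forall x y : T,
       ((C^-1 * d x y - C)%:E <= graph_dist R adj (F x) (F y))%E /\
       (graph_dist R adj (F x) (F y) <= (C * d x y + C)%:E)%E) /\
    (forall v : V, exists x : T, (graph_dist R adj (F x) v <= C%:E)%E).

(* Main.v *)
Require Import Defs.
From mathcomp Require Import all_boot all_order all_algebra.
From mathcomp Require Import all_classical all_reals ereal topology normedtype.
From mathcomp Require Import lra zify.
Import Order.TTheory GRing.Theory Num.Theory.
Local Open Scope classical_set_scope.
Local Open Scope ring_scope.

Lemma cover_list (T : topologicalType) (I : eqType) (A : set T) (f : I -> set T) :
  compact A -> (forall i, open (f i)) -> (forall x, A x -> exists i, f i x) ->
  exists l : seq I, forall x, A x -> exists2 i, i \in l & f i x.
Proof.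
move=> /compact_near_coveringP cA fo fc.
pose F := filter_from [set: seq I] (fun l => [set l' : seq I | {subset l <= l'}]).
have FF : Filter F.
  apply: filter_from_filter; first by exists [::].
  move=> l1 l2 _ _; exists (l1 ++ l2) => //= l' Hl; split => z Hz; apply: Hl;
  by rewrite mem_cat Hz ?orbT.
have H : forall x, A x -> \forall x' \near x & l \near F, (fun l x => exists2 i, i \in l & f i x) l x'.
  move=> x Ax; have [i fi] := fc x Ax.
  exists (f i, [set l' : seq I | {subset [:: i] <= l'}]).
    split => /=; first exact: open_nbhs_nbhs.
    by exists [:: i].
  case=> y l /= [fy Hl]; exists i => //; apply: Hl; by rewrite inE.
have [l _ Hl] := cA (seq I) F _ FF H.
exists l => x Ax; apply: (Hl l) => //.
Qed.

Lemma walk_cat {V : Type} {adj : V -> V -> Prop} {n m u w v} :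
  walk adj n u w -> walk adj m w v -> walk adj (n + m) u v.
Proof.
elim=> [//|n' u' w' v' huw hw IH] hm.
by rewrite addSn; apply: walkS huw (IH hm).
Qed.

Lemma walk_rev {V : Type} {adj : V -> V -> Prop} {n u v} :
  (forall a b, adj a b -> adj b a) -> walk adj n u v -> walk adj n v u.
Proof.
move=> hs; elim=> [v'|n' u' w' v' huw hw IH]; first exact: walk0.
rewrite -addn1; apply: walk_cat IH _.
apply: walkS (hs _ _ huw) (walk0 _ _).
Qed.

Lemma gd_le {R : realType} {V : Type} {adj : V -> V -> Prop} {n u v} :
  walk adj n u v -> (graph_dist R adj u v <= (n%:R)%:E)%E.
Proof. by move=> hw; apply: ereal_inf_lbound; exists n. Qed.

Lemma gd_walk {R : realType} {V : Type} {adj : V -> V -> Prop} {u v} {c : R} :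
  (graph_dist R adj u v <= c%:E)%E -> exists n, walk adj n u v /\ n%:R <= c + 1.
Proof.
move=> h.
have : (graph_dist R adj u v < (c + 1)%:E)%E.
  by apply: le_lt_trans h _; rewrite lte_fin ltrDl.
case/ereal_inf_lt => y [n hn <-]; rewrite lte_fin => hlt.
by exists n; split => //; apply: ltW.
Qed.

Lemma gd_lb {R : realType} (V : Type) (adj : V -> V -> Prop) u v (x : \bar R) :
  (forall n, walk adj n u v -> (x <= (n%:R)%:E)%E) -> (x <= graph_dist R adj u v)%E.
Proof. by move=> h; apply/ereal_infP => y [n hn <-]; apply: h. Qed.

Inductive wp (T : Type) (mul : T -> T -> T) (e : T) (S : set T) : nat -> T -> Prop :=
  | wp0 : wp T mul e S 0 e
  | wpS n k x : S k -> wp T mul e S n x -> wp T mul e S n.+1 (mul k x).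

Lemma bound_listn (I : eqType) (l : seq I) (Nf : I -> nat) :
  exists N, forall x, x \in l -> (Nf x <= N)%N.
Proof.
elim: l => [|y l [N HN]]; first by exists 0%N.
exists (maxn (Nf y) N) => x; rewrite in_cons => /orP[/eqP ->|xl].
  exact: leq_maxl.
apply: leq_trans (HN _ xl) _; exact: leq_maxr.
Qed.

Lemma chain_len_ge {R : realType} {T : Type} (d : T -> T -> R) b :
  is_metric d -> forall l x y, chain_ok d b x y l -> d x y <= chain_len d x l.
Proof.
case=> _ h0 _ htri; elim=> [|z l IH] x y /=.
  by move=> ->; rewrite (proj2 (h0 y y) erefl).
case=> _ hc; apply: le_trans (htri x z y) _; rewrite lerD2l; exact: IH.
Qed.

Section Grp.
Variables (T : topologicalType) (mul : T -> T -> T) (inv : T -> T) (e : T).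
Hypothesis HG : is_lc_group mul inv e.

Lemma gA x y z : mul x (mul y z) = mul (mul x y) z.
Proof. by case: HG. Qed.
Lemma g1l x : mul e x = x. Proof. by case: HG => _ /(_ x) []. Qed.
Lemma g1r x : mul x e = x. Proof. by case: HG => _ /(_ x) []. Qed.
Lemma gVl x : mul (inv x) x = e. Proof. by case: HG => _ _ /(_ x) []. Qed.
Lemma gVr x : mul x (inv x) = e. Proof. by case: HG => _ _ /(_ x) []. Qed.
Lemma gK x y : mul (inv x) (mul x y) = y.
Proof. by rewrite gA gVl g1l. Qed.
Lemma gKV x y : mul x (mul (inv x) y) = y.
Proof. by rewrite gA gVr g1l. Qed.
Lemma ginv_uniq a b : mul a b = e -> b = inv a.
Proof. by move=> H; rewrite -(gK a b) H g1r. Qed.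
Lemma ginvK x : inv (inv x) = x.
Proof. by apply/esym/ginv_uniq; rewrite gVl. Qed.
Lemma ginvM x y : inv (mul x y) = mul (inv y) (inv x).
Proof. by apply/esym/ginv_uniq; rewrite gA -[mul (mul x y) _]gA gVr g1r gVr. Qed.
Lemma ginv1 : inv e = e.
Proof. by apply/esym/ginv_uniq; rewrite g1l. Qed.
Lemma gcanc x y z : mul (inv (mul (inv x) y)) (mul (inv x) z) = mul (inv y) z.
Proof. by rewrite ginvM ginvK -gA gKV. Qed.

Lemma mul_cont : continuous (fun p : T * T => mul p.1 p.2).
Proof. by case: HG => _ _ _ []. Qed.
Lemma inv_cont : continuous inv.
Proof. by case: HG => _ _ _ []. Qed.

Lemma lmul_cont a : continuous (mul a).
Proof.
move=> y.
have -> : mul a = (fun p : T * T => mul p.1 p.2) \o (fun z => (a, z)) by [].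
apply: continuous_comp; last exact: mul_cont.
apply: cvg_pair; [exact: cvg_cst | exact: cvg_id].
Qed.

Lemma compact_img (f : T -> T) A : continuous f -> compact A -> compact (f @` A).
Proof.
move=> fc cA; apply: continuous_compact => //.
exact: continuous_subspaceT.
Qed.

Lemma compact_mulset A B : compact A -> compact B ->
  compact [set mul a b | a in A & b in B].
Proof.
move=> cA cB.
have -> : [set mul a b | a in A & b in B] =
   (fun p : T * T => mul p.1 p.2) @` (A `*` B).
  apply/seteqP; split => z.
  - by case=> a Aa [b Bb <-]; exists (a, b).
  - by case=> [[a b] [/= Aa Bb] <-]; exists a => //; exists b.
apply: continuous_compact; last exact: compact_setX.
apply: continuous_subspaceT; exact: mul_cont.
Qed.

Lemma nbhs_transl a U : nbhs e U -> nbhs a [set y | U (mul (inv a) y)].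
Proof.
move=> hU.
have := lmul_cont (inv a) a.
rewrite /continuous_at gVl => /(_ U hU).
by [].
Qed.

Lemma open_transl a W : open W -> open [set y | W (mul a y)].
Proof.
move=> oW; have := lmul_cont a.
by move/continuousP => /(_ W oW).
Qed.


Lemma q_cont : continuous (fun p : T * T => mul (inv p.1) p.2).
Proof.
move=> p.
have -> : (fun p : T * T => mul (inv p.1) p.2) =
  (fun p : T * T => mul p.1 p.2) \o (fun p : T * T => (inv p.1, p.2)) by [].
apply: continuous_comp; last exact: mul_cont.
apply: cvg_pair.
- apply: continuous_comp; last exact: inv_cont.
  exact: cvg_fst.
- exact: cvg_snd.
Qed.

Lemma nbhs_small U : nbhs e U ->
  exists W, [/\ open W, W e & forall x y, W x -> W y -> U (mul (inv x) y)].
Proof.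
move=> hU.
have := q_cont (e, e); rewrite /continuous_at /= ginv1 g1l => /(_ U hU).
case=> [[A1 A2]] /= [h1 h2] hs.
exists (interior (A1 `&` A2)); split.
- exact: open_interior.
- apply: nbhs_singleton; apply: nbhs_interior; exact: filterI.
- move=> x y /nbhs_singleton [Ax _] /nbhs_singleton [_ Ay].
  exact: (hs (x, y)).
Qed.

Lemma lc_e : exists U, compact U /\ nbhs e U.
Proof. by case: HG => _ _ _ _ [_ /(_ e)]. Qed.

Lemma compact_translist (l : seq T) U : compact U ->
  compact [set z | exists2 y, y \in l & U (mul (inv y) z)].
Proof.
move=> cU; elim: l => [|y l IH].
  have -> : [set z | exists2 y, y \in [::] & U (mul (inv y) z)] = set0.
    by apply/seteqP; split => z //= [].
  exact: compact0.
have -> : [set z | exists2 y0, y0 \in y :: l & U (mul (inv y0) z)] =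
  (mul y @` U) `|` [set z | exists2 y, y \in l & U (mul (inv y) z)].
  apply/seteqP; split => z /=.
  - case=> y0; rewrite in_cons => /orP[/eqP -> Hu|yl Hu].
      by left; exists (mul (inv y) z) => //; rewrite gKV.
    by right; exists y0.
  - case=> [[u Uu <-]|[y0 yl Hu]].
      by exists y; rewrite ?mem_head ?gK.
    by exists y0 => //; rewrite in_cons yl orbT.
apply: compactU => //; apply: compact_img => //; exact: lmul_cont.
Qed.

Lemma bound_list (l : seq T) (Nf : T -> nat) :
  exists N, forall x, x \in l -> (Nf x <= N)%N.
Proof.
elim: l => [|y l [N HN]]; first by exists 0%N.
exists (maxn (Nf y) N) => x; rewrite in_cons => /orP[/eqP ->|xl].
  exact: leq_maxl.
apply: leq_trans (HN _ xl) _; exact: leq_maxr.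
Qed.

Lemma unif_bound {R : realType} (d : T -> T -> R) :
  uniform_metric mul inv d -> forall r : R,
  exists K, compact K /\ forall g h, d g h <= r -> K (mul (inv g) h).
Proof.
move=> HU r.
have [U [cU nU]] := lc_e.
case: (pselect (exists l : seq T, forall p : T * T, d p.1 p.2 <= r ->
   exists2 y, y \in l & U (mul (inv y) (mul (inv p.1) p.2)))).
  case=> l Hl; exists [set z | exists2 y, y \in l & U (mul (inv y) z)].
  split; first exact: compact_translist.
  by move=> g h /(Hl (g, h)).
move=> Hn.
have nx : forall l : seq T, exists p : T * T, d p.1 p.2 <= r /\
   ~ (exists2 y, y \in l & U (mul (inv y) (mul (inv p.1) p.2))).
  move=> l; apply: contrapT => H; apply: Hn; exists l => p hp.
  apply: contrapT => H2; apply: H; exists p; split => //.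
pose pp (l : seq T) := sval (cid (nx l)).
pose L := fix L n := if n is n'.+1 then rcons (L n') (mul (inv (pp (L n')).1) (pp (L n')).2) else [::].
pose g n := (pp (L n)).1.
pose h n := (pp (L n)).2.
pose a n := mul (inv (g n)) (h n).
have hd n : d (g n) (h n) <= r by rewrite /g /h /pp; case: (cid _) => /= p [].
have ha n : ~ (exists2 y, y \in L n & U (mul (inv y) (a n))).
  by rewrite /a /g /h /pp; case: (cid _) => /= p [].
have hL m n : (m < n)%N -> a m \in L n.
  elim: n => [//|n IH]; rewrite ltnS leq_eqVlt => /orP[/eqP ->|mn].
    by rewrite /= mem_rcons mem_head.
  by rewrite /= mem_rcons in_cons (IH mn) orbT.
have hsep m n : (m < n)%N -> ~ U (mul (inv (a m)) (a n)).
  by move=> mn Hu; apply: (ha n); exists (a m) => //; exact: hL.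
have [W [oW We hW]] := nbhs_small U nU.
have leave : forall K : set T, compact K ->
    exists N, forall n, (N <= n)%N -> ~ K (mul (inv (g n)) (h n)).
  move=> K cK.
  have [lx Hlx] : exists l : seq T, forall z, K z -> exists2 x, x \in l & W (mul (inv x) z).
    apply: (@cover_list T T K (fun x => [set z | W (mul (inv x) z)]) cK).
      by move=> x; apply: open_transl.
    by move=> z _; exists z => /=; rewrite gVl.
  have hN : forall x, exists Nx, forall n, (Nx <= n)%N -> ~ W (mul (inv x) (a n)).
    move=> x; case: (pselect (exists n, W (mul (inv x) (a n)))).
      case=> n Wn; exists n.+1 => m nm Wm; apply: (hsep n m nm).
      by rewrite -(gcanc x); apply: hW.
    by move=> Hno; exists 0%N => n _ Wn; apply: Hno; exists n.
  have [N HN] := bound_list lx (fun x => sval (cid (hN x))).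
  exists N => n Nn Kn; have [x xl Wx] := Hlx _ Kn.
  move: (HN x xl); case: (cid (hN x)) => /= Nx HNx Nxle.
  exact: (HNx n (leq_trans Nxle Nn) Wx).
have [N HN] := (proj2 (HU g h) leave) r.
by move: (HN N (leqnn N)); rewrite ltNge hd.
Qed.


Lemma chain_sub {R : realType} (d : T -> T -> R) b (K H : set T) :
  (forall z w, d z w <= b -> K (mul (inv z) w)) ->
  (forall x y, H x -> H y -> H (mul x y)) -> K `<=` H ->
  forall l x y, chain_ok d b x y l -> H x -> H y.
Proof.
move=> hK hM KH; elim=> [|z l IH] x y /=; first by move=> ->.
case=> hxz hc Hx; apply: (IH z) => //.
by rewrite -(gKV x z); apply: hM => //; apply: KH; apply: hK.
Qed.

Lemma chain_exists {R : realType} (d : T -> T -> R) b x y :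
  (chain_dist d b x y < +oo)%E -> exists l, chain_ok d b x y l.
Proof.
move=> h; apply: contrapT => hn; move: h.
suff -> : chain_dist d b x y = +oo%E by [].
rewrite /chain_dist.
have -> : [set (chain_len d x l)%:E | l in [set l | chain_ok d b x y l]] = set0.
  by apply/seteqP; split => // z [l hl _]; apply: hn; exists l.
exact: ereal_inf0.
Qed.

Lemma cg_from_chains {R : realType} (d : T -> T -> R) b (K : set T) :
  compact K -> (forall z w, d z w <= b -> K (mul (inv z) w)) ->
  (forall y, (chain_dist d b e y < +oo)%E) -> compactly_generated mul inv e.
Proof.
move=> cK hK hf; exists K; split => // H He Hm Hi KH.
apply/seteqP; split => // y _.
have [l hl] := @chain_exists _ d b e y (hf y).
exact: (@chain_sub _ d b K H hK Hm KH l e y hl He).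
Qed.

Lemma P1_P5 {R : realType} (d : T -> T -> R) :
  uniform_metric mul inv d -> coarsely_geodesic d -> compactly_generated mul inv e.
Proof.
move=> hU [b [b0 [hf _]]].
have [K [cK hK]] := @unif_bound _ d hU b.
exact: (@cg_from_chains _ d b K cK hK (fun y => hf e y)).
Qed.

Lemma P2_P5 {R : realType} (d : T -> T -> R) :
  uniform_metric mul inv d -> quasi_geodesic d -> compactly_generated mul inv e.
Proof.
move=> hU [b [b0 [C [C0 hC]]]].
have [K [cK hK]] := @unif_bound _ d hU b.
apply: (@cg_from_chains _ d b K cK hK) => y.
apply: le_lt_trans (proj2 (hC e y)) _; exact: ltry.
Qed.

Lemma P3_P5 {R : realType} (d : T -> T -> R) :
  left_invariant mul d -> proper_metric d -> quasi_geodesic d ->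
  compactly_generated mul inv e.
Proof.
move=> hL hP [b [b0 [C [C0 hC]]]].
apply: (@cg_from_chains _ d b _ (hP e b)).
  by move=> z w hzw /=; rewrite -(gVl z) hL.
move=> y; apply: le_lt_trans (proj2 (hC e y)) _; exact: ltry.
Qed.


Lemma P4_P5 {R : realType} (d : T -> T -> R) (V : Type) (adj : V -> V -> Prop)
    (F : T -> V) :
  left_invariant mul d -> proper_metric d -> is_graph adj -> qi_to_graph d adj F ->
  compactly_generated mul inv e.
Proof.
move=> hL hP [hsym _] [C [C0 [hq hs]]].
pose b := C * (3 * C + 3).
have hwd : forall x z L, walk adj L (F x) (F z) -> L%:R <= 2 * C + 3 -> d x z <= b.
  move=> x z L hw hL'.
  have := le_trans (proj1 (hq x z)) (gd_le hw); rewrite lee_fin => h.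
  have -> : d x z = C * (C^-1 * d x z) by rewrite mulrA mulfV ?gt_eqF // mul1r.
  rewrite /b; apply: ler_wpM2l; [exact: ltW | lra].
have hpre : forall v, exists x k, walk adj k (F x) v /\ k%:R <= C + 1.
  move=> v; have [x hx] := hs v; have [k [hk hk']] := gd_walk hx.
  by exists x, k.
exists [set y | d e y <= b]; split; first exact: hP.
move=> H He Hm Hi KH.
have hstep : forall x z, d x z <= b -> H x -> H z.
  move=> x z hxz Hx; rewrite -(gKV x z); apply: Hm => //; apply: KH => /=.
  by rewrite -(gVl x) hL.
have main : forall n u v, walk adj n u v -> forall x k, walk adj k (F x) u ->
    k%:R <= C + 1 -> H x -> forall y k', walk adj k' (F y) v -> k'%:R <= C + 1 -> H y.
  move=> n u v; elim=> [w|n' u' w' v' huw hw IH] x k hk hkC Hx y k' hk' hkC'.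
    apply: (hstep x y) => //; apply: (hwd x y (k + k')%N).
      by apply: walk_cat hk _; apply: walk_rev.
    by rewrite natrD; lra.
  have [z [kz [hz hzC]]] := hpre w'.
  apply: (IH z kz hz hzC _ y k' hk' hkC').
  apply: (hstep x z) => //; apply: (hwd x z (k + (1 + kz))%N).
    apply: walk_cat hk _; apply: walk_cat (walkS huw (walk0 _ _)) _.
    exact: walk_rev.
  by rewrite !natrD; lra.
apply/seteqP; split => // y _.
have [n [hn _]] := gd_walk (proj2 (hq e y)).
apply: (main n _ _ hn e 0%N (walk0 _ _) _ He y 0%N (walk0 _ _)); lra.
Qed.


Section Word.
Variables (S U : set T).
Hypotheses (hSe : S e) (hSi : forall x, S x -> S (inv x)) (hSc : compact S)
  (hU : nbhs e U) (hUS : U `<=` S) (hgen : forall x, exists n, wp T mul e S n x).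

Local Notation P := (wp T mul e S).

Lemma wp_mono {n x} : P n x -> P n.+1 x.
Proof. by move=> h; rewrite -(g1l x); apply: wpS. Qed.

Lemma wp_le {n m x} : (n <= m)%N -> P n x -> P m x.
Proof.
move=> nm hx; elim: m nm => [|m IH]; first by rewrite leqn0 => /eqP <-.
rewrite leq_eqVlt => /orP[/eqP <-|nm] //; apply: wp_mono; exact: IH.
Qed.

Lemma wp_mul {n m x y} : P n x -> P m y -> P (n + m) (mul x y).
Proof.
elim=> [|n' k x' hk hx IH] hy; first by rewrite add0n g1l.
by rewrite addSn -gA; apply: wpS => //; apply: IH.
Qed.

Lemma wp_1 {k} : S k -> P 1 k.
Proof. by move=> hk; rewrite -(g1r k); apply: wpS => //; exact: wp0. Qed.

Lemma wp_inv {n x} : P n x -> P n (inv x).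
Proof.
elim=> [|n' k x' hk hx IH]; first by rewrite ginv1; exact: wp0.
rewrite ginvM -addn1; apply: wp_mul => //; apply: wp_1; exact: hSi.
Qed.

Lemma wp_compact n : compact (P n).
Proof.
elim: n => [|n IH].
  have -> : P 0 = [set e].
    apply/seteqP; split => x /=; last by move=> ->; exact: wp0.
    by move=> h; inversion h.
  exact: compact_set1.
have -> : P n.+1 = [set mul a b | a in S & b in P n].
  apply/seteqP; split => x /=.
    by move=> h; inversion h; subst; exists k => //; exists x0.
  by case=> a Sa [b Pb <-]; apply: wpS.
exact: compact_mulset.
Qed.

Lemma wp_cover A : compact A -> exists n, A `<=` P n.
Proof.
move=> cA.
have [ln Hln] : exists l : seq nat, forall x, A x -> exists2 i, i \in l & interior (P i) x.
  apply: (@cover_list T nat A (fun n => interior (P n)) cA).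
    by move=> n; exact: open_interior.
  move=> x _; have [n hn] := hgen x; exists n.+1.
  rewrite /interior /=; apply: filterS (nbhs_transl x U hU) => y /= hy.
  rewrite -(gKV x y) -addn1; apply: wp_mul => //; apply: wp_1; exact: hUS.
have [N HN] := @bound_listn _ ln id.
exists N => x /Hln [i il hi]; apply: (wp_le (HN i il)).
exact: nbhs_singleton.
Qed.

Lemma ex_wlen x : exists n, `[< P n x >].
Proof. by have [n hn] := hgen x; exists n; apply/asboolP. Qed.

Definition wlen x := ex_minn (ex_wlen x).

Lemma wlen_P x : P (wlen x) x.
Proof. by rewrite /wlen; case: ex_minnP => m /asboolP. Qed.

Lemma wlen_min {n x} : P n x -> (wlen x <= n)%N.
Proof. by rewrite /wlen; case: ex_minnP => m _ hm hx; apply: hm; apply/asboolP. Qed.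

Lemma wlen_leP n x : (wlen x <= n)%N <-> P n x.
Proof.
split; last exact: wlen_min.
by move=> h; apply: wp_le h (wlen_P x).
Qed.

Lemma wlen_e : wlen e = 0%N.
Proof. by apply/eqP; rewrite -leqn0; apply: wlen_min; exact: wp0. Qed.

Lemma wlen_0 x : wlen x = 0%N -> x = e.
Proof. by move=> h; have := wlen_P x; rewrite h => hx; inversion hx. Qed.

Lemma wlen_inv x : wlen (inv x) = wlen x.
Proof.
apply/eqP; rewrite eqn_leq; apply/andP; split; apply: wlen_min.
  exact: wp_inv (wlen_P x).
by have := wp_inv (wlen_P (inv x)); rewrite ginvK.
Qed.

Lemma wlen_mul x y : (wlen (mul x y) <= wlen x + wlen y)%N.
Proof. by apply: wlen_min; apply: wp_mul; exact: wlen_P. Qed.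

Lemma wlen_S {k} : S k -> (wlen k <= 1)%N.
Proof. by move=> hk; apply: wlen_min; exact: wp_1. Qed.

Definition wd x y := wlen (mul (inv x) y).

Lemma wd_sym x y : wd x y = wd y x.
Proof. by rewrite /wd -wlen_inv ginvM ginvK. Qed.

Lemma wd_tri x y z : (wd x z <= wd x y + wd y z)%N.
Proof.
rewrite /wd; have -> : mul (inv x) z = mul (mul (inv x) y) (mul (inv y) z).
  by rewrite -gA gKV.
exact: wlen_mul.
Qed.

Lemma wd_xx x : wd x x = 0%N.
Proof. by rewrite /wd gVl wlen_e. Qed.

Lemma wd_eq0 x y : wd x y = 0%N -> x = y.
Proof. by move=> /wlen_0 h; rewrite -(gKV x y) h g1r. Qed.

Lemma wd_linv g x y : wd (mul g x) (mul g y) = wd x y.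
Proof. by rewrite /wd ginvM -gA gK. Qed.

Variable R : realType.
Definition dW x y : R := (wd x y)%:R.

Lemma dW_metric : is_metric dW.
Proof.
split.
- by move=> x y; rewrite /dW ler0n.
- move=> x y; split; last by move=> ->; rewrite /dW wd_xx.
  by rewrite /dW => /eqP; rewrite pnatr_eq0 => /eqP; apply: wd_eq0.
- by move=> x y; rewrite /dW wd_sym.
- by move=> x y z; rewrite /dW -natrD ler_nat; exact: wd_tri.
Qed.

Lemma dW_linv : left_invariant mul dW.
Proof. by move=> g x y; rewrite /dW wd_linv. Qed.

Lemma dW_proper : proper_metric dW.
Proof.
move=> x r.
case: (ltrP r 0) => hr.
  have -> : [set y | dW x y <= r] = set0.
    apply/seteqP; split => y //= h.
    by have := le_lt_trans (le_trans (ler0n _ _) h) hr; rewrite ltxx.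
  exact: compact0.
have -> : [set y | dW x y <= r] = mul x @` P (Num.trunc r).
  apply/seteqP; split => y /=.
    rewrite /dW /wd -truncn_ge_nat // => /wlen_leP h.
    by exists (mul (inv x) y) => //; rewrite gKV.
  case=> z hz <-; rewrite /dW /wd gK -truncn_ge_nat //.
  exact/wlen_leP.
apply: compact_img; [exact: lmul_cont | exact: wp_compact].
Qed.

Lemma dW_uniform : uniform_metric mul inv dW.
Proof.
move=> g h; split.
  move=> hM K cK; have [m Hm] := wp_cover K cK.
  have [N HN] := hM m%:R.
  exists N => n Nn /Hm /wlen_leP hle.
  by have := HN n Nn; rewrite /dW /wd ltr_nat ltnNge hle.
move=> hK M.
have [N HN] := hK _ (wp_compact (Num.trunc M)).
exists N => n Nn; have := HN n Nn => hn.
apply: lt_le_trans (truncnS_gt M) _; rewrite /dW /wd ler_nat.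
by rewrite ltnNge; apply/negP => /wlen_leP.
Qed.

Lemma dW_chain {n a} : P n a -> forall x, exists l,
  chain_ok dW 1 x (mul x a) l /\ chain_len dW x l <= n%:R.
Proof.
elim=> [|n' k a' hk ha IH] x.
  by exists [::]; rewrite g1r.
have [l [hl hlen]] := IH (mul x k).
exists (mul x k :: l); split => /=.
  split; last by rewrite -gA in hl.
  by rewrite /dW /wd gK lern1 wlen_S.
rewrite -add1n natrD; apply: lerD => //.
by rewrite /dW /wd gK ler_nat wlen_S.
Qed.

Lemma dW_chain_dist x y : (chain_dist dW 1 x y <= (dW x y)%:E)%E.
Proof.
have [l [hl hlen]] := dW_chain (wlen_P (mul (inv x) y)) x.
rewrite gKV in hl.
apply: le_trans (ereal_inf_lbound _) _; first by exists l.
by rewrite lee_fin.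
Qed.

Lemma dW_qgeo : quasi_geodesic dW.
Proof.
exists 1; split => //; exists 1; split => // x y; split.
  apply/ereal_infP => z [l hl <-]; rewrite lee_fin invr1 mul1r.
  have h := chain_len_ge dW 1 dW_metric l x y hl.
  by rewrite lerBlDr; apply: le_trans h _; rewrite lerDl.
apply: le_trans (dW_chain_dist x y) _; rewrite lee_fin mul1r lerDl //.
Qed.

Lemma dW_cgeo : coarsely_geodesic dW.
Proof.
exists 1; split => //; split.
  by move=> x y; apply: le_lt_trans (dW_chain_dist x y) _; exact: ltry.
move=> r; exists r => x y h; apply: le_trans (dW_chain_dist x y) _.
by rewrite lee_fin.
Qed.


Definition sep (A : set T) := forall x y, A x -> A y -> x <> y -> (2 < wd x y)%N.

Lemma net_exists : exists A, sep A /\ forall g, exists n, A n /\ (wd g n <= 2)%N.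
Proof.
have [A [sA mA]] : exists A, sep A /\ forall B, A `<` B -> ~ sep B.
  apply: Zorn_bigcup.
  move=> F FS tF x y [X FX Xx] [Y FY Yy] xy.
  case: (tF X Y FX FY) => [XY|YX].
    by apply: (FS Y FY) => //; apply: XY.
  by apply: (FS X FX) => //; apply: YX.
exists A; split => // g; apply: contrapT => hn.
have hA : forall n, A n -> (2 < wd g n)%N.
  move=> n An; rewrite ltnNge; apply/negP => h; apply: hn; by exists n.
apply: (mA (A `|` [set g])).
  split; first by move=> x Ax; left.
  move=> h; have := hA g (h g (or_intror erefl)).
  by rewrite wd_xx.
move=> x y [Ax|->] [Ay|->] xy.
- exact: sA.
- by rewrite wd_sym; apply: hA.
- exact: hA.
- by case: xy.
Qed.


Lemma in_list_mapE (X : eqType) (Y : Type) (f : X -> Y) (x : X) (s : seq X) :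
  x \in s -> in_list (f x) (map f s).
Proof.
elim: s => [//|y s IH]; rewrite in_cons => /orP[/eqP ->|xs] /=.
  by left.
by right; apply: IH.
Qed.

Lemma dW_graph : exists (V : Type) (adj : V -> V -> Prop) (F : T -> V),
  [/\ is_graph adj, bounded_degree adj & qi_to_graph dW adj F].
Proof.
have [A [sA hn]] := net_exists.
pose V := {x : T | A x}.
pose pk (g : T) := cid (hn g).
pose F (g : T) : V := exist _ (proj1_sig (pk g)) (proj1 (proj2_sig (pk g))).
have hF g : (wd g (proj1_sig (F g)) <= 2)%N by rewrite /F /=; case: (pk g) => /= n [].
pose adj (u v : V) := u <> v /\ (wd (proj1_sig u) (proj1_sig v) <= 5)%N.
have sepV : forall u v : V, (wd (proj1_sig u) (proj1_sig v) <= 2)%N -> u = v.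
  move=> [u Au] [v Av] /= h; apply: eq_exist; apply: contrapT => uv.
  by have := sA u v Au Av uv; rewrite ltnNge h.
exists V, adj, F; split.
- split.
    by move=> u v [uv h]; split; [move=> vu; apply: uv | rewrite wd_sym].
  by move=> v [].
- pose W := interior U.
  have oW : open W by exact: open_interior.
  have We : W e by apply: nbhs_singleton; apply: nbhs_interior.
  have WS : W `<=` S by move=> z /nbhs_singleton; apply: hUS.
  have [ly Hly] : exists l : seq T, forall z, P 5 z -> exists2 y, y \in l & W (mul (inv y) z).
    apply: (@cover_list T T (P 5) (fun y => [set z | W (mul (inv y) z)]) (wp_compact 5)).
      by move=> y; apply: open_transl.
    by move=> z _; exists z => /=; rewrite gVl.
  exists (size ly) => v.
  pose pkv (y : T) : V := match pselect (exists w : V, adj v w /\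
      W (mul (inv y) (mul (inv (proj1_sig v)) (proj1_sig w)))) with
    | left H => proj1_sig (cid H) | right _ => v end.
  exists (map pkv ly); split; first by rewrite size_map.
  move=> w [vw hvw].
  have [y yl Wy] := Hly _ (proj1 (wlen_leP _ _) hvw).
  suff -> : w = pkv y by apply: in_list_mapE.
  rewrite /pkv; case: pselect => [H|H]; last first.
    by exfalso; apply: H; exists w.
  case: (cid H) => w' [hw' Ww'] /=.
  apply: sepV; rewrite /wd -(gcanc (proj1_sig v)) -(gcanc y).
  apply: wlen_min; rewrite -[2%N]/(1 + 1)%N; apply: wp_mul.
    by apply: wp_1; apply: hSi; apply: WS.
  by apply: wp_1; apply: WS.
- have hFF x y : (wd (proj1_sig (F x)) (proj1_sig (F y)) <= wd x y + 4)%N.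
    have := wd_tri (proj1_sig (F x)) x (proj1_sig (F y)).
    have := wd_tri x y (proj1_sig (F y)).
    have := hF x; have := hF y; have := wd_sym (proj1_sig (F x)) x; lia.
  have wup : forall n a, P n a -> forall x, exists m, (m <= n)%N /\ walk adj m (F x) (F (mul x a)).
    move=> n a; elim=> [|n' k a' hk ha IH] x.
      by exists 0%N; rewrite g1r; split => //; exact: walk0.
    have [m [mn hw]] := IH (mul x k); rewrite gA.
    case: (pselect (F x = F (mul x k))) => [->|neq].
      by exists m; split => //; apply: leq_trans mn _.
    exists m.+1; split => //; apply: walkS hw; split => //.
    have := hFF x (mul x k); have : (wd x (mul x k) <= 1)%N by rewrite /wd gK wlen_S.
    lia.
  have wdown : forall n u v, walk adj n u v -> (wd (proj1_sig u) (proj1_sig v) <= 5 * n)%N.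
    move=> n u v; elim=> [w|n' u' w' v' [_ huw] hw IH]; first by rewrite wd_xx.
    have := wd_tri (proj1_sig u') (proj1_sig w') (proj1_sig v'); lia.
  exists 5; split => //; split.
    move=> x y; split.
      apply: gd_lb => m hm.
      have h1 := wdown _ _ _ hm.
      have h2 : (wd x y <= 5 * m + 4)%N.
        have := wd_tri x (proj1_sig (F x)) y; have := wd_tri (proj1_sig (F x)) (proj1_sig (F y)) y.
        have := hF x; have := hF y; rewrite [wd (proj1_sig (F y)) y]wd_sym; lia.
      rewrite lee_fin /dW.
      have : ((wd x y)%:R <= 5 * m%:R + 4 :> R).
        by rewrite -[5]/(5%:R) -[4]/(4%:R) -natrM -natrD ler_nat.
      lra.
    have [m [mn hw]] := wup _ _ (wlen_P (mul (inv x) y)) x.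
    rewrite gKV in hw.
    apply: le_trans (gd_le hw) _; rewrite lee_fin /dW.
    have : (m%:R <= (wd x y)%:R :> R) by rewrite ler_nat.
    have := ler0n R (wd x y); lra.
  move=> v; exists (proj1_sig v).
  case: (pselect (F (proj1_sig v) = v)) => [->|neq].
    by apply: le_trans (gd_le (walk0 _ _)) _; rewrite lee_fin ler0n.
  apply: le_trans (gd_le (walkS _ (walk0 _ _))) _; last first.
    by rewrite lee_fin; lra.
  split => //; rewrite wd_sym; apply: leq_trans (hF (proj1_sig v)) _; done.
Qed.


Lemma word_all : exists d : T -> T -> R,
  [/\ is_metric d, uniform_metric mul inv d, coarsely_geodesic d, quasi_geodesic d &
      [/\ left_invariant mul d, proper_metric d &
      exists (V : Type) (adj : V -> V -> Prop) (F : T -> V),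
        [/\ is_graph adj, bounded_degree adj & qi_to_graph d adj F]]].
Proof.
exists dW; split; last split.
- exact: dW_metric.
- exact: dW_uniform.
- exact: dW_cgeo.
- exact: dW_qgeo.
- exact: dW_linv.
- exact: dW_proper.
- exact: dW_graph.
Qed.

End Word.

Lemma P5_all (R : realType) : compactly_generated mul inv e ->
  exists d : T -> T -> R,
  [/\ is_metric d, uniform_metric mul inv d, coarsely_geodesic d, quasi_geodesic d &
      [/\ left_invariant mul d, proper_metric d &
      exists (V : Type) (adj : V -> V -> Prop) (F : T -> V),
        [/\ is_graph adj, bounded_degree adj & qi_to_graph d adj F]]].
Proof.
case=> K [cK hK].
have [U [cU nU]] := lc_e.
pose K1 := K `|` U.
pose S := K1 `|` inv @` K1.
have hUS : U `<=` S by move=> x Ux; left; right.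
have hSe : S e by apply: hUS; exact: nbhs_singleton.
have hSi : forall x, S x -> S (inv x).
  move=> x [K1x|[y K1y <-]]; first by right; exists x.
  by left; rewrite ginvK.
have hSc : compact S.
  have cK1 : compact K1 by exact: compactU.
  apply: compactU => //; apply: compact_img => //; exact: inv_cont.
have hgen : forall x, exists n, wp T mul e S n x.
  have hH : [set x | exists n, wp T mul e S n x] = setT.
    apply: hK.
    - by exists 0%N; exact: wp0.
    - move=> x y [n hx] [m hy]; exists (n + m)%N; exact: wp_mul.
    - by move=> x [n hx]; exists n; exact: wp_inv.
    - by move=> x Kx; exists 1%N; apply: wp_1; left; left.
  by move=> x; have : [set: T] x by []; rewrite -hH.
exact: (@word_all S U hSe hSi hSc nU hUS hgen R).
Qed.

End Grp.

Theorem proposition6p4 (R : realType) (T : topologicalType)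
    (mul : T -> T -> T) (inv : T -> T) (e : T) :
  is_lc_group mul inv e ->
  let P1 := exists d : T -> T -> R,
      [/\ is_metric d, uniform_metric mul inv d & coarsely_geodesic d] in
  let P2 := exists d : T -> T -> R,
      [/\ is_metric d, uniform_metric mul inv d & quasi_geodesic d] in
  let P3 := exists d : T -> T -> R,
      [/\ is_metric d, left_invariant mul d, proper_metric d & quasi_geodesic d] in
  let P4 := exists d : T -> T -> R,
      [/\ is_metric d, left_invariant mul d & proper_metric d] /\
      exists (V : Type) (adj : V -> V -> Prop) (F : T -> V),
        [/\ is_graph adj, bounded_degree adj & qi_to_graph d adj F] in
  let P5 := compactly_generated mul inv e in
  [/\ P1 <-> P5, P2 <-> P5, P3 <-> P5 & P4 <-> P5].
Proof.
move=> HG P1 P2 P3 P4 P5.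
have all5 := @P5_all T mul inv e HG R.
split; split.
- by case=> d [_ hU hC]; exact: (@P1_P5 T mul inv e HG R d hU hC).
- by move=> /all5 [d [hm hU hC hQ _]]; exists d.
- by case=> d [_ hU hQ]; exact: (@P2_P5 T mul inv e HG R d hU hQ).
- by move=> /all5 [d [hm hU hC hQ _]]; exists d.
- by case=> d [_ hL hP hQ]; exact: (@P3_P5 T mul inv e HG R d hL hP hQ).
- by move=> /all5 [d [hm hU hC hQ [hL hP _]]]; exists d.
- case=> d [[_ hL hP] [V [adj [F [hg _ hq]]]]].
  exact: (@P4_P5 T mul inv e HG R d V adj F hL hP hg hq).
- by move=> /all5 [d [hm hU hC hQ [hL hP hG]]]; exists d.
Qed.
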